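(* Let $\Delta$ be a finite set with $|\Delta|\ge2$, $\ell\ge2$, $\Omega=\Delta^\ell$, $W=\mathrm{Sym}\,\Delta\wr S_\ell$ in product action on $\Omega$, $G\le W$, and let $M$ be a minimal normal subgroup of $G$ transitive on $\Omega$, $M=T_1\times\cdots\times T_k$ with the $T_i$ isomorphic finite simple groups. Let $\Gamma$ be a connected graph with vertex set $\Omega$ with $G\le\mathrm{Aut}\,\Gamma$. Suppose $M$ is not regular on $\Omega$ and the inclusion $G\le W$ is normal. Then $\Gamma$ is not $(G,2)$-arc-transitive.
   Context: Product action: $(\delta_1,\dots,\delta_\ell)^{(g_1,\dots,g_\ell)h}=(\delta_{1h^{-1}}g_{1h^{-1}},\dots,\delta_{\ell h^{-1}}g_{\ell h^{-1}})$. Let $\pi:W\to S_\ell$ be the natural projection, $W_j$ the stabiliser of $j$ under $\pi$, $W_j=\mathrm{Sym}\,\Delta\times(\mathrm{Sym}\,\Delta\wr S_{\ell-1})$ with the first factor on the $j$-th coordinate; the component $M^{(j)}$ is the projection of $M\cap W_j$ onto the first factor, identified (for non-abelian $M$) with the product of those $T_i$ not in the kernel of $M\to M^{(j)}$. The inclusion $G\le W$ is normal if $M$ is non-abelian and each $T_i$ lies in exactly one $M^{(j)}$ (equivalently $M=\prod_jM^{(j)}$). $\Gamma$ is $(G,2)$-arc-transitive if $G$ is transitive on sequences $(v_0,v_1,v_2)$ of vertices with $v_0\sim v_1\sim v_2$ and $v_0\ne v_2$. *)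

(* Defs.v *)
From mathcomp Require Import all_boot all_fingroup all_solvable.
Set Implicit Arguments. Unset Strict Implicit. Unset Printing Implicit Defensive.
Import GroupScope.

Section Wreath.
Variables (D : finType) (l : nat).

Local Notation Omega := {ffun 'I_l -> D}.

(* product action of (g_1,...,g_l)h : (delta_i)_i  |->  (delta_{i h^-1} g_{i h^-1})_i *)
Definition wr_act (g : {ffun 'I_l -> {perm D}}) (h : {perm 'I_l}) (d : Omega)
  : Omega := [ffun i => g (h^-1 i) (d (h^-1 i))].

Definition Wr : {set {perm Omega}} :=
  [set s : {perm Omega} | [exists g : {ffun 'I_l -> {perm D}}, [exists h : {perm 'I_l}, [forall d, s d == wr_act g h d]]]].

(* W_j : the stabiliser of j under pi : W -> S_l *)
Definition Wr_stab (j : 'I_l) : {set {perm Omega}} :=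
  [set s : {perm Omega} | [exists g : {ffun 'I_l -> {perm D}}, [exists h : {perm 'I_l}, (h j == j) && [forall d, s d == wr_act g h d]]]].

(* the component M^(j): projection of M \cap W_j onto the j-th Sym D factor *)
Definition component (M : {set {perm Omega}}) (j : 'I_l) : {set {perm D}} :=
  [set x | [exists s in M :&: Wr_stab j, [exists g : {ffun 'I_l -> {perm D}}, [exists h : {perm 'I_l},
     [&& h j == j, g j == x & [forall d, s d == wr_act g h d]]]]]].

Definition prod_components (M : {set {perm Omega}}) : {set {perm Omega}} :=
  [set s : {perm Omega} | [exists g : {ffun 'I_l -> {perm D}}, [forall j, g j \in component M j]
                      && [forall d, s d == wr_act g 1 d]]].

Definition normal_inclusion (M : {group {perm Omega}}) : Prop :=
  ~~ abelian M /\ M :=: prod_components M.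

End Wreath.

Section Graphs.
Variable V : finType.

Definition regular_on (M : {group {perm V}}) : Prop :=
  [transitive M, on [set: V] | 'P] /\ forall x : V, 'C_M[x | 'P] = 1.

Definition simple_graph (e : rel V) : Prop :=
  (forall x y, e x y = e y x) /\ (forall x, ~~ e x x).

Definition connected_graph (e : rel V) : Prop := forall x y, connect e x y.

Definition in_Aut (e : rel V) (G : {set {perm V}}) : Prop :=
  forall s, s \in G -> forall x y, e (s x) (s y) = e x y.

Definition two_arc (e : rel V) (a : V * V * V) : bool :=
  [&& e a.1.1 a.1.2, e a.1.2 a.2 & a.1.1 != a.2].

Definition two_arc_transitive (e : rel V) (G : {set {perm V}}) : Prop :=
  forall a b, two_arc e a -> two_arc e b ->
    exists2 s, s \in G & (s a.1.1, s a.1.2, s a.2) = b.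

End Graphs.

Notation Omega D l := {ffun 'I_l -> D}.

(* Main.v *)
Require Import Defs.
From mathcomp Require Import all_boot all_fingroup all_solvable.
From Stdlib Require Import Classical.
Import GroupScope.

Section Helpers.
Variables (D : finType) (l : nat).
Local Notation Om := {ffun 'I_l -> D}.

Definition AO (k : 'I_l) (x y : Om) := forall i, i != k -> x i = y i.

Lemma AO_refl k x : AO k x x. Proof. by []. Qed.
Lemma AO_sym k x y : AO k x y -> AO k y x.
Proof. by move=> H i Hi; rewrite H. Qed.
Lemma AO_trans k x y z : AO k x y -> AO k y z -> AO k x z.
Proof. by move=> H1 H2 i Hi; rewrite H1 // H2. Qed.

Lemma wr_act1 (g : {ffun 'I_l -> {perm D}}) (d : Om) : wr_act g 1 d = [ffun i => g i (d i)].
Proof. by apply/ffunP => i; rewrite !ffunE invg1 perm1. Qed.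

Lemma Wr_rep s : s \in Wr D l -> exists g h, forall d, s d = wr_act g h d.
Proof.
rewrite inE => /existsP [g /existsP [h /forallP H]].
by exists g, h => d; exact: (eqP (H d)).
Qed.

Lemma near_transport s x z : s \in Wr D l -> (exists k, AO k x z) ->
  exists k, AO k (s x) (s z).
Proof.
move=> /Wr_rep [g [h Hs]] [k Hk]; exists (h k) => i Hi.
rewrite !Hs !ffunE Hk //; apply: contra Hi => /eqP <-.
by rewrite permKV.
Qed.

Lemma one_in_component (M : {group {perm Om}}) k : 1 \in component M k.
Proof.
have Hw : forall d : Om, (1 : {perm Om}) d == @wr_act D l [ffun=> 1] 1 d.
  by move=> d; apply/eqP/ffunP => i; rewrite wr_act1 !ffunE !perm1.
rewrite inE; apply/existsP; exists 1; apply/andP; split.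
  rewrite inE group1 /= inE; apply/existsP; exists [ffun=> 1].
  apply/existsP; exists 1; rewrite perm1 eqxx /=; exact/forallP.
apply/existsP; exists [ffun=> 1]; apply/existsP; exists 1.
by rewrite perm1 eqxx ffunE eqxx /=; exact/forallP.
Qed.

Lemma M_rep (M : {group {perm Om}}) m : M :=: prod_components M -> m \in M ->
  exists g : {ffun 'I_l -> {perm D}}, (forall j, g j \in component M j) /\
     forall d, m d = [ffun i => g i (d i)].
Proof.
move=> HM; rewrite {1}HM inE => /existsP [g /andP [/forallP H1 /forallP H2]].
exists g; split; first exact: H1. move=> d; rewrite -(wr_act1 g d); exact: (eqP (H2 d)).
Qed.

Lemma AO_back (M : {group {perm Om}}) m k u w : M :=: prod_components M ->
  m \in M -> AO k (m u) (m w) -> AO k u w.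
Proof.
move=> HM /(M_rep M m HM) [g [_ Hg]] H i Hi.
by have := H i Hi; rewrite !Hg !ffunE => /perm_inj.
Qed.

End Helpers.
Arguments AO {D l} k x y.
Arguments AO_refl {D l} k x.
Arguments AO_sym {D l k x y}.
Arguments AO_trans {D l k x y z}.
Arguments near_transport {D l s x z}.
Arguments one_in_component {D l} M k.
Arguments M_rep {D l M m}.
Arguments AO_back {D l M m k u w}.

Theorem corollary3p5 (D : finType) (l : nat)
  (G M : {group {perm Omega D l}}) (e : rel (Omega D l)) :
  2 <= #|D| -> 2 <= l ->
  G \subset Wr D l ->
  M <| G -> minnormal M G ->
  [transitive M, on [set: Omega D l] | 'P] ->
  simple_graph e -> connected_graph e -> in_Aut e G ->
  ~ regular_on M ->
  normal_inclusion M ->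
  ~ two_arc_transitive e G.
Proof.
move=> _ Hl GW nMG _ trM [esy eirr] conn aut nreg [_ HM] tat.
have MG : forall m, m \in M -> m \in G by apply/subsetP/normal_sub.
case: (classic (exists a m b, [/\ m \in M, m a = a, e a b & m b != b])) => [|nA]; last first.
  apply: nreg; split => // x; apply/trivgP/subsetP => m.
  rewrite inE => /andP [mM /astab1P /= mx].
  rewrite inE; apply/eqP/permP => y; rewrite perm1.
  have /connectP [p pth ->] := conn x y.
  elim: p x mx pth => [|z p IH] x mx /=; first by [].
  move=> /andP [exz pth]; apply: IH pth.
  case: (eqVneq (m z) z) => // hne; exfalso; by apply: nA; exists x, m, z.
case=> a [m [b [mM ma eab mb]]].
have [g [gC gm]] := M_rep HM mM.
have : [exists j, g j (b j) != b j].
  apply: contraNT mb => /existsPn H; apply/eqP/ffunP => i; rewrite gm ffunE.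
  exact/eqP/negPn/H.
case/existsP => j hj.
have gja : g j (a j) = a j.
  by have := congr1 (fun f : Omega D l => f j) ma; rewrite gm ffunE.
pose g' : {ffun 'I_l -> {perm D}} := [ffun k => if k == j then g j else 1].
have finj : injective (fun d : Omega D l => [ffun i => g' i (d i)]).
  move=> d1 d2 /ffunP H; apply/ffunP => i; have := H i; rewrite !ffunE => /perm_inj.
  done.
pose m' := perm finj.
have m'M : m' \in M.
  rewrite HM inE; apply/existsP; exists g'; apply/andP; split.
    apply/forallP => k; rewrite ffunE; case: eqP => [->|_]; first exact: gC.
    exact: one_in_component.
  by apply/forallP => d; rewrite permE wr_act1.
have m'a : m' a = a.
  apply/ffunP => i; rewrite permE !ffunE; case: eqP => [->|_]; first exact: gja.
  by rewrite perm1.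
pose c := m' b.
have eac : e a c by have := aut m' (MG _ m'M) a b; rewrite m'a eab.
have AObc : AO j b c.
  by move=> i hi; rewrite /c permE !ffunE (negbTE hi) perm1.
have bcj : b j != c j by rewrite /c permE !ffunE eqxx eq_sym.
have bc : b != c by apply: contraNneq bcj => ->.
have d12 : a j <> b j.
  move=> h; move: hj; by rewrite -h gja h eqxx.
have d23 : b j <> g j (b j) by apply/eqP; rewrite eq_sym.
have d13 : a j <> g j (b j).
  by move=> h; apply: d12; apply: (@perm_inj _ (g j)); rewrite -h gja.
have Hnear : forall p q, e a p -> e a q -> p != q -> exists k, AO k p q.
  move=> p q eap eaq pq.
  have ta : two_arc e (b, a, c) by rewrite /two_arc /= esy eab eac bc.
  have tb : two_arc e (p, a, q) by rewrite /two_arc /= esy eap eaq pq.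
  have [s sG] := tat _ _ ta tb; rewrite /= => -[sb sa sc].
  rewrite -sb -sc; apply: near_transport; first exact: (subsetP GW).
  by exists j.
have HGa : forall p, e a p -> AO j p b.
  move=> p eap.
  case: (eqVneq p b) => [->|pb]; first exact: AO_refl.
  case: (eqVneq p c) => [->|pc]; first exact: AO_sym.
  have [k Hk] : exists k, AO k b p by apply: Hnear => //; rewrite eq_sym.
  have [k' Hk'] : exists k, AO k c p by apply: Hnear => //; rewrite eq_sym.
  have [i hi] : exists i, b i != p i.
    apply/existsP; apply: contraNT pb => /existsPn H; apply/eqP/ffunP => i.
    apply/esym/eqP; exact: negPn (H i).
  case: (eqVneq i k) => [ik|nik]; last by move: hi; rewrite Hk // eqxx.
  subst i.
  case: (eqVneq k j) => [kj|kj]; first by rewrite -kj; exact: AO_sym Hk.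
  exfalso.
  have ck : c k != p k by rewrite -(AObc k kj).
  have k'k : k' = k.
    case: (eqVneq k' k) => // nk; move: ck.
    by rewrite Hk' ?eqxx // eq_sym.
  have cj : c j != p j.
    have bjpj : b j = p j by apply: Hk; rewrite eq_sym.
    by rewrite -bjpj eq_sym.
  have k'j : k' = j.
    case: (eqVneq k' j) => // nk; move: cj.
    by rewrite Hk' ?eqxx // eq_sym.
  by move: kj; rewrite -k'k k'j eqxx.
have HG : forall y u w, e y u -> e y w -> AO j u w.
  move=> y u w eyu eyw.
  have [m1 m1M hy] := atransP2 trM (in_setT a) (in_setT y).
  subst y.
  have mi : m1^-1 \in M by rewrite groupV.
  have ea : forall v, e (m1 a) v -> e a (m1^-1 v).
    by move=> v h; have := aut _ (MG _ mi) (m1 a) v; rewrite permK => ->.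
  apply: (AO_back HM mi).
  exact: AO_trans (HGa _ (ea _ eyu)) (AO_sym (HGa _ (ea _ eyw))).
have walk : forall p v w, e v w ->
    ((AO j v a /\ AO j w b) \/ (AO j v b /\ AO j w a)) -> path e w p ->
    AO j (last w p) a \/ AO j (last w p) b.
  elim=> [|u p IH] v w evw Q /=; first by case: Q => [[]|[]]; auto.
  move=> /andP [ewu pth]; apply: (IH w) => //.
  have uv : AO j u v by apply: (HG w); [exact: ewu | rewrite esy].
  by case: Q => [[h1 h2]|[h1 h2]]; [right|left]; split => //; exact: AO_trans uv h1.
have l0 : 0 < l by exact: ltnW Hl.
pose k0 : 'I_l := Ordinal l0.
pose k1 : 'I_l := Ordinal Hl.
have [k kj] : exists k : 'I_l, k != j.
  case: (eqVneq j k0) => [->|h]; last by exists k0; rewrite eq_sym.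
  by exists k1.
have [d [hd1 hd2]] : exists d, d <> a k /\ d <> b k.
  case: (classic (a j <> a k /\ a j <> b k)) => [H|H1]; first by exists (a j).
  case: (classic (b j <> a k /\ b j <> b k)) => [H|H2]; first by exists (b j).
  have E1 : a j = a k \/ a j = b k.
    case: (eqVneq (a j) (a k)) => [e1|n1]; first by left.
    case: (eqVneq (a j) (b k)) => [e2|n2]; first by right.
    by exfalso; apply: H1; split; apply/eqP.
  have E2 : b j = a k \/ b j = b k.
    case: (eqVneq (b j) (a k)) => [e1|n1]; first by left.
    case: (eqVneq (b j) (b k)) => [e2|n2]; first by right.
    by exfalso; apply: H2; split; apply/eqP.
  exists (g j (b j)); split => h3; case: E1 => e1; case: E2 => e2; congruence.
pose x : Omega D l := [ffun i => if i == k then d else a i].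
have /connectP [p pth xe] := conn a x.
case: p pth xe => [|z p] /=.
  move=> _ xa; apply: hd1; have := congr1 (fun f : Omega D l => f k) xa.
  by rewrite /x ffunE eqxx.
move=> /andP [eaz pth] xe.
have := walk p a z eaz (or_introl (conj (AO_refl j a) (HGa z eaz))) pth.
rewrite -xe; case=> H; [apply: hd1 | apply: hd2]; have := H k kj;
  by rewrite /x ffunE eqxx.
Qed.
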